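(* Let $\mathfrak k$ be a commutative field, $\mathfrak R=\mathfrak k[x_1,\dots,x_m]_0$ and $\bar{\mathfrak R}=\mathfrak k[x_1,\dots,x_m]\subset\mathfrak R$. Let $I$ be an ideal of $\mathfrak R$ and $\bar I=I\cap\bar{\mathfrak R}$. The injection $\lambda:\bar{\mathfrak R}\hookrightarrow\mathfrak R$ induces an injection of chain-complexes $\lambda:\mathrm{Ksz}_{\bar{\mathfrak R}}(\bar{\mathfrak R}/\bar I)\hookrightarrow\mathrm{Ksz}_{\mathfrak R}(\mathfrak R/I)$, which in turn induces an isomorphism $H_*(\mathrm{Ksz}_{\bar{\mathfrak R}}(\bar{\mathfrak R}/\bar I))\cong H_*(\mathrm{Ksz}_{\mathfrak R}(\mathfrak R/I))$.
   Context: $\mathfrak R$ is the polynomial ring localized at $0\in\mathfrak k^m$ (quotients $P/Q$ with $Q(0)\ne0$). For a ring $S\in\{\bar{\mathfrak R},\mathfrak R\}$ and an $S$-module $M$, the Koszul complex $\mathrm{Ksz}_S(M)$ has $\mathrm{Ksz}_n(M)=M\otimes_{\mathfrak k}\wedge^nV$, $V$ the $\mathfrak k$-vector space with basis $dx_1,\dots,dx_m$, and differential $d(\alpha\,dx_{i_1}\cdots dx_{i_n})=\sum_j(-1)^{j-1}\alpha x_{i_j}\,dx_{i_1}\cdots\widehat{dx_{i_j}}\cdots dx_{i_n}$. *)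

(* Defs.v *)
From HB Require Import structures.
From mathcomp Require Import all_boot all_order all_algebra.
From mathcomp Require Import fraction.
From mathcomp Require Import mpoly.
Set Implicit Arguments. Unset Strict Implicit. Unset Printing Implicit Defensive.
Import Order.TTheory GRing.Theory Num.Theory.
Local Open Scope ring_scope.

Section Koszul.
Variables (k : fieldType) (m : nat).

Definition Pol := {mpoly k[m]}.
Definition Frac := {fraction Pol}.
Definition inFrac (p : Pol) : Frac := FracField.tofrac p.

Definition inPol (x : Frac) : Prop := exists p : Pol, x = inFrac p.

(* Elements of R = k[x_1..x_m]_0 : quotients P/Q with Q(0) <> 0. *)
Definition inLoc (x : Frac) : Prop :=
  exists p q : Pol, q.@[fun _ => 0] != 0 /\ x = inFrac p / inFrac q.

Definition is_ideal (S I : Frac -> Prop) : Prop :=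
  (forall x, I x -> S x) /\ I 0 /\
  (forall x y, I x -> I y -> I (x + y)) /\
  (forall r x, S r -> I x -> I (r * x)).

Definition xvar (i : 'I_m) : Frac := inFrac 'X_i.

(* Chains of the Koszul complex: an element of M (x)_k /\^n V, with
   M = S/J, is given by its coefficients on the basis dx_T
   (T = {i_1 < ... < i_n}, #|T| = n), the coefficients being
   representatives in S of classes of S/J. *)
Definition chain := {set 'I_m} -> Frac.

Definition is_chain (S : Frac -> Prop) (n : nat) (c : chain) : Prop :=
  (forall T, S (c T)) /\ (forall T : {set 'I_m}, #|T| != n -> c T = 0).

(* Koszul differential:
   d(a dx_{i_1}...dx_{i_n}) = sum_j (-1)^(j-1) a x_{i_j} dx_{i_1}..^..dx_{i_n},
   i.e. the coefficient of dx_T in d c is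
   sum_{i notin T} (-1)^#{t in T | t < i} x_i c(T u {i}). *)
Definition kdiff (c : chain) : chain := fun T =>
  \sum_(i : 'I_m | i \notin T)
     (-1) ^+ #|[set t in T | (t < i)%N]| * xvar i * c (i |: T).

Definition eq_mod (J : Frac -> Prop) (c c' : chain) : Prop :=
  forall T : {set 'I_m}, J (c T - c' T).

Definition is_cycle (S J : Frac -> Prop) (n : nat) (c : chain) : Prop :=
  is_chain S n c /\ eq_mod J (kdiff c) (fun _ => 0).

Definition homologous (S J : Frac -> Prop) (n : nat) (c c' : chain) : Prop :=
  exists w, is_chain S n.+1 w /\ eq_mod J (fun T => c T - c' T) (kdiff w).

(* The map induced on homology H_n by the chain map
   lambda : Ksz_S(S/J) -> Ksz_S'(S'/J')  (identity on representatives)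
   is a bijection. *)
Definition induces_homology_iso (S J S' J' : Frac -> Prop) (n : nat) : Prop :=
  (forall z z', is_cycle S J n z -> is_cycle S J n z' ->
     (homologous S J n z z' <-> homologous S' J' n z z')) /\
  (forall z', is_cycle S' J' n z' ->
     exists z, is_cycle S J n z /\ homologous S' J' n z z').

End Koszul.

(* Main.v *)
Require Import Defs.
From HB Require Import structures.
From mathcomp Require Import all_boot all_order all_algebra.
From mathcomp Require Import fraction mpoly.
From mathcomp Require Import ring.
Set Warnings "-notation-overridden,-ambiguous-paths,-notation-incompatible-prefix".
Import Order.TTheory GRing.Theory Num.Theory.
Local Open Scope ring_scope.

Section Gen.
Variables (k : fieldType) (m : nat).
Local Notation F := (Frac k m).
Local Notation ch := (chain k m).

Lemma inFrac0 : inFrac (0 : Pol k m) = 0. Proof. exact: rmorph0. Qed.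
Lemma inFrac1 : inFrac (1 : Pol k m) = 1. Proof. exact: rmorph1. Qed.
Lemma inFracD (p q : Pol k m) : inFrac (p + q) = inFrac p + inFrac q. Proof. exact: rmorphD. Qed.
Lemma inFracM (p q : Pol k m) : inFrac (p * q) = inFrac p * inFrac q. Proof. exact: rmorphM. Qed.
Lemma inFracN (p : Pol k m) : inFrac (- p) = - inFrac p. Proof. exact: rmorphN. Qed.
Lemma inFrac_eq0 (p : Pol k m) : (inFrac p == 0) = (p == 0). Proof. exact: tofrac_eq0. Qed.

Definition sg (T : {set 'I_m}) (i : 'I_m) : F := (-1) ^+ #|[set t in T | (t < i)%N]|.

Lemma kdiffE (c : ch) T :
  kdiff c T = \sum_(i : 'I_m | i \notin T) sg T i * xvar k i * c (i |: T).
Proof. by []. Qed.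

Lemma sgU1 (T : {set 'I_m}) i j : j \notin T ->
  sg (j |: T) i = (if (j < i)%N then -1 else 1) * sg T i.
Proof.
move=> jT; rewrite /sg.
case: ifP => ji.
  have -> : [set t in j |: T | (t < i)%N] = j |: [set t in T | (t < i)%N].
    apply/setP => x; rewrite !inE; case: eqVneq => [->|] //=; by rewrite ji.
  by rewrite cardsU1 inE (negbTE jT) /= add1n exprS.
have -> : [set t in j |: T | (t < i)%N] = [set t in T | (t < i)%N].
  apply/setP => x; rewrite !inE; case: eqVneq => [->|] //=; by rewrite ji (negbTE jT).
by rewrite mul1r.
Qed.

Lemma sg2 T i : sg T i * sg T i = 1.
Proof. by rewrite /sg -exprMn mulrNN mulr1 expr1n. Qed.

Definition hop (i : 'I_m) (c : ch) : ch := fun U =>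
  if i \in U then sg U i * c (U :\ i) else 0.

Lemma homotopy i (c : ch) T :
  kdiff (hop i c) T + hop i (kdiff c) T = xvar k i * c T.
Proof.
rewrite /hop kdiffE; case: (boolP (i \in T)) => iT.
  rewrite [kdiff c _]kdiffE [X in _ + _ * X](bigD1 i) /= ?setD11 //.
  have e1 : sg (T :\ i) i = sg T i.
    by rewrite -{2}(setD1K iT) sgU1 ?setD11 // ltnn mul1r.
  rewrite setD1K // e1.
  rewrite [X in _ * (_ + X)](eq_bigl (fun j => j \notin T)); last first.
    move=> j; rewrite !inE; case: (eqVneq j i) => [->|] /=.
      by rewrite iT.
    by rewrite andbT.
  rewrite mulrDr addrCA [X in _ + (_ + X)]mulr_sumr -big_split /= big1 ?addr0.
    by rewrite mulrA mulrA sg2 mul1r.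
  move=> j jT.
  have ji : j != i by apply: contraNneq jT => ->.
  rewrite in_setU1 iT orbT.
  have -> : (j |: T) :\ i = j |: (T :\ i).
    apply/setP => x; rewrite !inE; case: (eqVneq x i) => [->|xi] /=; last by [].
    by rewrite eq_sym (negbTE ji).
  have jT' : j \notin T :\ i by rewrite inE negb_and jT orbT.
  rewrite sgU1 //.
  rewrite -{1}(setD1K iT) sgU1 ?setD11 //.
  case: (ltngtP i j) => [lij|lji|eij].
  - ring.
  - ring.
  - by move: ji; rewrite -val_eqE /= eij eqxx.
rewrite addr0 (bigD1 i) //= !inE eqxx /= setU1K // sgU1 // ltnn mul1r.
rewrite big1 ?addr0; first by rewrite -[RHS]mul1r -(sg2 T i); ring.
move=> j /andP [jT ji]; rewrite in_setU1 (negbTE iT) orbF eq_sym (negbTE ji).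
by rewrite mulr0.
Qed.


Definition sclc (r : F) (c : ch) : ch := fun T => r * c T.

Lemma kdiffZ r c T : kdiff (sclc r c) T = r * kdiff c T.
Proof. rewrite !kdiffE mulr_sumr; apply: eq_bigr => j _; rewrite /sclc; ring. Qed.
Lemma kdiffB (c c' : ch) T :
  kdiff (fun U => c U - c' U) T = kdiff c T - kdiff c' T.
Proof. rewrite !kdiffE -sumrB; apply: eq_bigr => j _; ring. Qed.
Lemma kdiffD (c c' : ch) T :
  kdiff (fun U => c U + c' U) T = kdiff c T + kdiff c' T.
Proof. rewrite !kdiffE -big_split; apply: eq_bigr => j _ /=; ring. Qed.

Section SJ.
Set Default Proof Using "All".
Variables (S J : F -> Prop).
Hypotheses (SD : forall x y, S x -> S y -> S (x + y))
  (SM : forall x y, S x -> S y -> S (x * y))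
  (SP : forall p, S (inFrac p)) (HJ : is_ideal S J).

Lemma S0 : S 0. Proof. by rewrite -(rmorph0 (@inFrac k m)); apply: SP. Qed.
Lemma SN1 : S (-1). Proof. by rewrite -(rmorph1 (@inFrac k m)) -rmorphN; apply: SP. Qed.
Lemma SX i : S (xvar k i). Proof. exact: SP. Qed.
Lemma SN1X n : S ((-1) ^+ n).
Proof. elim: n => [|n IH]; first by rewrite expr0 -(rmorph1 (@inFrac k m)); apply: SP.
by rewrite exprS; apply: SM => //; apply: SN1. Qed.
Lemma Ssg T i : S (sg T i). Proof. exact: SN1X. Qed.
Lemma SB x y : S x -> S y -> S (x - y).
Proof. by move=> Sx Sy; apply: SD => //; rewrite -mulN1r; apply: SM => //; apply: SN1. Qed.

Lemma J0 : J 0. Proof. by case: HJ => _ [h _]. Qed.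
Lemma JD x y : J x -> J y -> J (x + y). Proof. by case: HJ => _ [_ [h _]]; apply: h. Qed.
Lemma JM r x : S r -> J x -> J (r * x). Proof. by case: HJ => _ [_ [_ h]]; apply: h. Qed.
Lemma JB x y : J x -> J y -> J (x - y).
Proof. by move=> Jx Jy; apply: JD => //; rewrite -mulN1r; apply: JM => //; apply: SN1. Qed.

Lemma kdiff_S n c : is_chain S n c -> forall T, S (kdiff c T).
Proof.
move=> [Sc _] T; rewrite kdiffE; apply: (big_ind S) => //; first exact: S0.
by move=> j _; apply: SM; [apply: SM; [apply: Ssg|apply: SX]|].
Qed.





Lemma chainZ r n c : S r -> is_chain S n c -> is_chain S n (sclc r c).
Proof. move=> Sr [Sc Dc]; split=> T; [exact: SM | by move/Dc; rewrite /sclc => ->; rewrite mulr0]. Qed.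



Lemma chainD n c c' : is_chain S n c -> is_chain S n c' ->
  is_chain S n (fun T => c T + c' T).
Proof.
move=> [Sc Dc] [Sc' Dc']; split=> T; first exact: SD.
by move=> h; rewrite (Dc _ h) (Dc' _ h) addr0.
Qed.

Lemma chainB n c c' : is_chain S n c -> is_chain S n c' ->
  is_chain S n (fun T => c T - c' T).
Proof.
move=> [Sc Dc] [Sc' Dc']; split=> T; first exact: SB.
by move=> h; rewrite (Dc _ h) (Dc' _ h) subr0.
Qed.

Definition bnd n (c : ch) := exists w, is_chain S n.+1 w /\ eq_mod J c (kdiff w).

Lemma bnd_ext n (c c' : ch) : (forall T, c T = c' T) -> bnd n c -> bnd n c'.
Proof. by move=> e [w [wc we]]; exists w; split=> // T; rewrite -e. Qed.

Lemma bnd0 n : bnd n (fun _ => 0).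
Proof.
exists (fun _ => 0); split; first by split=> // T; apply: S0.
move=> T; rewrite kdiffE big1 ?subr0; [exact: J0 | by move=> j _; rewrite mulr0].
Qed.

Lemma bndD n c c' : bnd n c -> bnd n c' -> bnd n (fun T => c T + c' T).
Proof.
move=> [w [wc we]] [w' [wc' we']]; exists (fun T => w T + w' T); split.
  exact: chainD.
move=> T; rewrite kdiffD.
have -> : c T + c' T - (kdiff w T + kdiff w' T) = (c T - kdiff w T) + (c' T - kdiff w' T) by ring.
exact: JD.
Qed.

Lemma bndZ n r c : S r -> bnd n c -> bnd n (sclc r c).
Proof.
move=> Sr [w [wc we]]; exists (sclc r w); split; first exact: chainZ.
move=> T; rewrite kdiffZ /sclc -mulrBr; exact: JM.
Qed.

Lemma bndB n c c' : bnd n c -> bnd n c' -> bnd n (fun T => c T - c' T).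
Proof.
move=> b b'; apply: (@bnd_ext n (fun T => c T + sclc (-1) c' T)).
  by move=> T; rewrite /sclc mulN1r.
by apply: bndD => //; apply: bndZ => //; apply: SN1.
Qed.


Arguments bnd_ext {n c c'}.
Arguments bndD {n c c'}.
Arguments bndZ {n r c}.
Arguments bndB {n c c'}.
Lemma hop_chain i n c : is_chain S n c -> is_chain S n.+1 (hop i c).
Proof.
move=> [Sc Dc]; split=> U; rewrite /hop; case: ifP => iU.
- by apply: SM; [apply: Ssg | apply: Sc].
- exact: S0.
- move=> h; rewrite Dc ?mulr0 //; apply: contra h => /eqP e.
  by rewrite (cardsD1 i U) iU e.
- by [].
Qed.

Lemma bndX n z i : is_cycle S J n z -> bnd n (sclc (xvar k i) z).
Proof.
move=> [zc zd]; exists (hop i z); split; first exact: hop_chain.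
move=> T; rewrite /sclc -(homotopy i z T) addrAC subrr add0r /hop.
case: ifP => _; last exact: J0.
apply: JM; first exact: Ssg.
by have := zd (T :\ i); rewrite subr0.
Qed.

Lemma cycleZ r n z : S r -> is_cycle S J n z -> is_cycle S J n (sclc r z).
Proof.
move=> Sr [zc zd]; split; first exact: chainZ.
move=> T; rewrite kdiffZ subr0; apply: JM => //; by have := zd T; rewrite subr0.
Qed.

Arguments cycleZ {r n z}.
Arguments bndX {n z}.
Lemma cycleB n z z' : is_cycle S J n z -> is_cycle S J n z' ->
  is_cycle S J n (fun T => z T - z' T).
Proof.
move=> [zc zd] [zc' zd']; split; first exact: chainB.
move=> T; rewrite kdiffB subr0; apply: JB; [by have := zd T; rewrite subr0 | by have := zd' T; rewrite subr0].
Qed.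

Definition cst (p : Pol k m) : Pol k m := (p.@[fun _ => 0])%:MP.

Lemma bnd_poly p n z : is_cycle S J n z ->
  bnd n (fun T => inFrac p * z T - inFrac (cst p) * z T).
Proof.
pose H p := forall n z, is_cycle S J n z ->
  bnd n (fun T => inFrac p * z T - inFrac (cst p) * z T).
have HC c : H c%:MP.
  move=> n' z' _; apply: (@bnd_ext n' (fun _ => 0)); last exact: bnd0.
  by move=> T; rewrite /cst mevalC subrr.
have HX i : H 'X_i.
  move=> n' z' zc; apply: (bnd_ext _ (bndX i zc)).
  by move=> T; rewrite /cst mevalXU mpolyC0 inFrac0 mul0r subr0.
have HD p1 q : H p1 -> H q -> H (p1 + q).
  move=> hp hq n' z' zc; apply: (bnd_ext _ (bndD (hp n' z' zc) (hq n' z' zc))).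
  by move=> T; rewrite /cst mevalD mpolyCD !inFracD; ring.
have HM p1 q : H p1 -> H q -> H (p1 * q).
  move=> hp hq n' z' zc.
  have zq := cycleZ (SP q) zc.
  have zc0 := cycleZ (SP (cst p1)) zc.
  apply: (bnd_ext _ (bndD (hp n' _ zq) (hq n' _ zc0))).
  by move=> T; rewrite /sclc /cst mevalM mpolyCM !inFracM; ring.
have HXn i e : H ('X_i ^+ e).
  elim: e => [|e IH]; first by rewrite expr0 -mpolyC1; apply: (HC).
  by rewrite exprS; apply: (HM).
move: n z; change (H p).
elim/mpolyind: p => [|c mm p _ _ hp]; first by rewrite -mpolyC0; apply: (HC).
apply: (HD) => //; rewrite -mul_mpolyC; apply: (HM) => //.
rewrite mpolyXE_id; apply: (big_ind H) => //; first by rewrite -mpolyC1; apply: (HC).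
Qed.

End SJ.
End Gen.

Lemma helper (K : fieldType) (a b c : K) : b != 0 -> b * a * (c / b) = a * c.
Proof. move=> h; field. exact: h. Qed.

Section Inst.
Variables (k : fieldType) (m : nat).
Local Notation F := (Frac k m).
Local Notation P := (@inPol k m).
Local Notation L := (@inLoc k m).

Lemma qnz (q : Pol k m) : q.@[fun _ => 0] != 0 -> inFrac q != 0.
Proof. move=> h; rewrite inFrac_eq0; apply: contraNneq h => ->; by rewrite meval0. Qed.
Arguments qnz {q}.

Lemma Pol_D x y : P x -> P y -> P (x + y).
Proof. by case=> p ->; case=> q ->; exists (p + q); rewrite inFracD. Qed.
Lemma Pol_M x y : P x -> P y -> P (x * y).
Proof. by case=> p ->; case=> q ->; exists (p * q); rewrite inFracM. Qed.
Lemma Pol_P p : P (inFrac p). Proof. by exists p. Qed.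

Lemma Loc_P p : L (inFrac p).
Proof. by exists p, 1; rewrite meval1 oner_neq0 inFrac1 divr1. Qed.
Lemma Pol_Loc x : P x -> L x. Proof. by case=> p ->; apply: Loc_P. Qed.
Lemma Loc_D x y : L x -> L y -> L (x + y).
Proof.
case=> p1 [q1 [h1 ->]]; case=> p2 [q2 [h2 ->]].
exists (p1 * q2 + p2 * q1), (q1 * q2); split; first by rewrite mevalM mulf_neq0.
have n1 := qnz h1; have n2 := qnz h2.
by rewrite inFracD !inFracM (@addf_div (Frac k m) _ _ _ _ n1 n2).
Qed.
Lemma Loc_M x y : L x -> L y -> L (x * y).
Proof.
case=> p1 [q1 [h1 ->]]; case=> p2 [q2 [h2 ->]].
exists (p1 * p2), (q1 * q2); split; first by rewrite mevalM mulf_neq0.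
have n1 := qnz h1; have n2 := qnz h2.
by rewrite !inFracM (@mulf_div (Frac k m)).
Qed.

Lemma clear (w : chain k m) : (forall T, L (w T)) ->
  exists Q : Pol k m, Q.@[fun _ => 0] != 0 /\ forall T, P (inFrac Q * w T).
Proof.
move=> hw.
suff [Q [hQ hs]] : exists Q : Pol k m, Q.@[fun _ => 0] != 0 /\
    forall T, T \in enum [set: {set 'I_m}] -> P (inFrac Q * w T).
  by exists Q; split=> // T; apply: hs; rewrite mem_enum in_setT.
elim: (enum _) => [|T0 s [Q [hQ hs]]].
  by exists 1; rewrite meval1 oner_neq0; split.
have [p [q [hq e]]] := hw T0.
exists (q * Q); split; first by rewrite mevalM mulf_neq0.
move=> T; rewrite in_cons => /orP [/eqP ->|Ts].
  exists (Q * p); by rewrite e !inFracM (@helper (Frac k m) _ _ _ (qnz hq)).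
have [R eR] := hs T Ts; exists (q * R); by rewrite !inFracM -mulrA eR.
Qed.

Variables (I : F -> Prop) (HI : is_ideal L I).
Let Ib := fun x => I x /\ P x.

Lemma HIb : is_ideal P Ib.
Proof.
case: HI => _ [I0 [ID IM]].
split; first by move=> x [].
split; first by split=> //; rewrite -inFrac0; apply: Pol_P.
split; first by move=> x y [Ix Px] [Iy Py]; split; [exact: ID | exact: Pol_D].
move=> r x Pr [Ix Px]; split; [apply: (IM) => //; exact: Pol_Loc | exact: Pol_M].
Qed.


Lemma main_aux :
  (forall n c, is_chain P n c -> is_chain L n c) /\
  (forall n c c', is_chain P n c -> is_chain P n c' ->
     (eq_mod Ib c c' <-> eq_mod I c c')) /\
  (forall n, induces_homology_iso P Ib L I n).
Proof.
have IM : forall r x, L r -> I x -> I (r * x) by case: HI => _ [_ [_ h]].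
split.
  by move=> n c [Sc Dc]; split=> // T; apply: Pol_Loc.
split.
  move=> n c c' [Sc _] [Sc' _]; split=> h T; first by case: (h T).
  split; first exact: h.
  exact: (@SB k m P Ib Pol_D Pol_M Pol_P HIb).
move=> n; split.
- move=> z z' zc zc'; split.
  + case=> w [[Sw Dw] we]; exists w; split; first by split=> // T; apply: Pol_Loc.
    by move=> T; case: (we T).
  + case=> w [wc we].
    have [Q [hQ hQw]] := clear _ (proj1 wc).
    have Dc := @cycleB k m P Ib Pol_D Pol_M Pol_P HIb n z z' zc zc'.
    change (bnd k m P Ib n (fun T => z T - z' T)).
    set D := fun T => z T - z' T in Dc *.
    have wQ : is_chain P n.+1 (sclc k m (inFrac Q) w).
      split=> T; first exact: hQw.
      by move=> h; rewrite /sclc (proj2 wc T h) mulr0.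
    have B1 : bnd k m P Ib n (sclc k m (inFrac Q) D).
      exists (sclc k m (inFrac Q) w); split => // T.
      rewrite kdiffZ /sclc -mulrBr; split.
        by apply: (IM); [exact: Loc_P | exact: we].
      rewrite mulrBr; apply: (@SB k m P Ib Pol_D Pol_M Pol_P HIb).
        by apply: Pol_M; [exact: Pol_P | exact: (proj1 (proj1 Dc) T)].
      have := @kdiff_S k m P Ib Pol_D Pol_M Pol_P HIb _ _ wQ T.
      by rewrite kdiffZ.
    have B2 := @bnd_poly k m P Ib Pol_D Pol_M Pol_P HIb Q n D Dc.
    have B3 := @bndB k m P Ib Pol_D Pol_M Pol_P HIb _ _ _ B1 B2.
    set c0 := Q.@[fun _ => 0].
    have hr : inFrac (c0^-1)%:MP * inFrac (c0%:MP) = 1 :> F.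
      by rewrite -inFracM -mpolyCM mulVf // mpolyC1 inFrac1.
    have B4 := @bndZ k m P Ib Pol_D Pol_M Pol_P HIb n (inFrac (c0^-1)%:MP) _ (Pol_P _) B3.
    apply: (@bnd_ext k m P Ib Pol_D Pol_M Pol_P HIb n _ _ _ B4) => T.
    rewrite /sclc /cst -/c0.
    transitivity (inFrac (c0^-1)%:MP * inFrac c0%:MP * D T); first ring.
    by rewrite hr mul1r.
- move=> z' [zc' zd'].
  have [Q [hQ hQz]] := clear _ (proj1 zc').
  set c0 := Q.@[fun _ => 0].
  have hr : inFrac (c0^-1)%:MP * inFrac (c0%:MP) = 1 :> F.
    by rewrite -inFracM -mpolyCM mulVf // mpolyC1 inFrac1.
  pose r : F := inFrac (c0^-1)%:MP.
  have zc : is_chain P n (sclc k m r (sclc k m (inFrac Q) z')).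
    split=> T; first by apply: Pol_M; [exact: Pol_P | exact: hQz].
    by move=> h; rewrite /sclc (proj2 zc' T h) !mulr0.
  exists (sclc k m r (sclc k m (inFrac Q) z')); split.
    split; first exact: zc.
    move=> T; rewrite /= subr0; split.
      rewrite !kdiffZ; apply: (IM); first exact: Loc_P.
      apply: (IM); first exact: Loc_P.
      by have := zd' T; rewrite subr0.
    exact: (@kdiff_S k m P Ib Pol_D Pol_M Pol_P HIb _ _ zc T).
  have B := @bnd_poly k m L I Loc_D Loc_M Loc_P HI Q n z' (conj zc' zd').
  have B' := @bndZ k m L I Loc_D Loc_M Loc_P HI n r _ (Loc_P _) B.
  apply: (@bnd_ext k m L I Loc_D Loc_M Loc_P HI n _ _ _ B') => T.
  rewrite /sclc /cst -/c0.
  transitivity (r * (inFrac Q * z' T) - r * inFrac c0%:MP * z' T); first ring.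
  by rewrite /r hr mul1r.
Qed.

End Inst.

Theorem mainTheorem14 (k : fieldType) (m : nat) (I : Frac k m -> Prop) :
  is_ideal (@inLoc k m) I ->
  let Ibar := fun x => I x /\ inPol x in
  (forall n c, is_chain (@inPol k m) n c -> is_chain (@inLoc k m) n c) /\
  (forall n c c', is_chain (@inPol k m) n c -> is_chain (@inPol k m) n c' ->
     (eq_mod Ibar c c' <-> eq_mod I c c')) /\
  (forall n, induces_homology_iso (@inPol k m) Ibar (@inLoc k m) I n).
Proof. move=> HI Ibar; exact: (@main_aux k m I HI). Qed.
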